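(* Let $\mathscr X$ be a Banach space, $\mathscr Y$ a Hilbert space and $A:\mathscr X\to\mathscr Y$ a bounded linear operator with adjoint $A^*:\mathscr Y\to\mathscr X^*$. Let $\mathcal R:\mathscr X\to[0,\infty]$ be proper, lower semi-continuous and $c_0$-strongly convex for some $c_0>0$. Assume the equation $Ax=y$ has a solution in $\mathrm{dom}(\mathcal R)$, and let $x^\dagger$ be its unique $\mathcal R$-minimizing solution. Let $y_1,y_2,\dots$ be independent identically distributed $\mathscr Y$-valued random variables on a probability space with $\mathbb E[y_1]=y$ and $0<\sigma^2:=\mathbb E[\|y_1-y\|^2]<\infty$, and set $\bar y^{(n)}=\frac1n\sum_{i=1}^n y_i$. For fixed $n\ge1$ and step size $\gamma>0$ define, with $\lambda_0^{(n)}=0$, $$x_t^{(n)}=\arg\min_{x\in\mathscr X}\{\mathcal R(x)-\langle\lambda_t^{(n)},Ax\rangle\},\qquad \lambda_{t+1}^{(n)}=\lambda_t^{(n)}-\gamma(Ax_t^{(n)}-\bar y^{(n)}),\quad t\ge0.$$ Let $L:=\|A\|^2/(2c_0)$ and assume $0<\gamma<1/L$. Then for all integers $t\ge0$, $$c\gamma(t+1)\|Ax_t^{(n)}-\bar y^{(n)}\|^2+\frac{1}{8\gamma(t+1)}\|\lambda_{t+1}^{(n)}\|^2\le \eta_t+\gamma(t+1)\|\bar y^{(n)}-y\|^2,$$ where $c:=\frac12-\frac{L\gamma}{2}>0$ and $$\eta_t:=\sup_{x\in\mathscr X}\Big\{\mathcal R(x^\dagger)-\mathcal R(x)-\tfr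ac13\gamma(t+1)\|Ax-y\|^2\Big\}.$$
   Context: A proper function $f:\mathscr X\to(-\infty,\infty]$ is $c_0$-strongly convex if $f(s\bar x+(1-s)x)+c_0s(1-s)\|\bar x-x\|^2\le sf(\bar x)+(1-s)f(x)$ for all $\bar x,x\in\mathrm{dom}(f)$, $s\in[0,1]$. An $\mathcal R$-minimizing solution $x^\dagger$ of $Ax=y$ satisfies $Ax^\dagger=y$ and $\mathcal R(x^\dagger)=\min\{\mathcal R(x):Ax=y\}$. The minimizer defining $x_t^{(n)}$ exists and is unique by strong convexity; $\langle\cdot,\cdot\rangle$ denotes the inner product of $\mathscr Y$. *)

(* Defs.v *)
From HB Require Import structures.
From mathcomp Require Import all_boot all_order all_algebra.
From mathcomp Require Import all_classical all_reals all_analysis.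
Set Implicit Arguments. Unset Strict Implicit. Unset Printing Implicit Defensive.
Import Order.TTheory GRing.Theory Num.Theory.
Import numFieldNormedType.Exports.
Local Open Scope classical_set_scope.
Local Open Scope ring_scope.

(* A real inner product on Y inducing the norm of Y: together with
   completeness of Y this makes Y a (real) Hilbert space. *)
Definition is_inner_product {R : realType} {Y : normedModType R}
  (ip : Y -> Y -> R) : Prop :=
  [/\ (forall u v, ip u v = ip v u),
      (forall a u v w, ip (a *: u + v) w = a * ip u w + ip v w),
      (forall u, 0 <= ip u u) &
      (forall u, `|u| ^+ 2 = ip u u)].

Definition opnorm {R : realType} {X Y : normedModType R} (A : X -> Y) : R :=
  sup [set `|A x| | x in [set x : X | `|x| <= 1]].

(* proper: somewhere finite (values in [0, +oo] are imposed separately) *)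
Definition proper_fun {R : realType} {X : Type} (f : X -> \bar R) : Prop :=
  exists x, (f x < +oo)%E.

Definition strongly_convex {R : realType} {X : normedModType R}
  (c0 : R) (f : X -> \bar R) : Prop :=
  forall (xb x : X) (s : R), (f xb < +oo)%E -> (f x < +oo)%E ->
    0 <= s <= 1 ->
    (f (s *: xb + (1 - s) *: x)%R + (c0 * s * (1 - s) * `|xb - x| ^+ 2)%:E
      <= s%:E * f xb + (1 - s)%:E * f x)%E.

Definition R_minimizing_solution {R : realType} {X Y : normedModType R}
  (A : X -> Y) (f : X -> \bar R) (y : Y) (xd : X) : Prop :=
  A xd = y /\ forall x, A x = y -> (f xd <= f x)%E.

Definition eta_t {R : realType} {X Y : normedModType R}
  (A : X -> Y) (f : X -> \bar R) (y : Y) (xd : X) (gamma : R) (t : nat)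
  : \bar R :=
  ereal_sup [set (f xd - f z - (gamma * t.+1%:R / 3 * `|A z - y| ^+ 2)%:E)%E
            | z in [set: X]].

(* Main.v *)
Require Import Defs.
From HB Require Import structures.
From mathcomp Require Import all_boot all_order all_algebra.
From mathcomp Require Import all_classical all_reals all_analysis.
From mathcomp Require Import lra ring.
Import Order.TTheory GRing.Theory Num.Theory.
Import numFieldNormedType.Exports.
Local Open Scope classical_set_scope.
Local Open Scope ring_scope.

Lemma opnorm_le (R : realType) (X Y : normedModType R) (A : {linear X -> Y})
  (HAc : continuous A) (u : X) : `|A u| <= opnorm A * `|u|.
Proof.
have [M HM] : exists M, forall x, `|x| <= 1 -> `|A x| <= M.
  by move: HAc => /linear_bounded_continuous /bounded_funP /(_ 1).
have hs : has_sup [set `|A x| | x in [set x : X | `|x| <= 1]].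
  split; first by exists (`|A 0|); exists 0 => //=; rewrite normr0.
  by exists M => _ [x /= hx <-]; exact: HM.
have [->|u0] := eqVneq u 0; first by rewrite linear0 !normr0 mulr0.
have nu : 0 < `|u| by rewrite normr_gt0.
have : `|A (`|u|^-1 *: u)| <= opnorm A.
  apply: sup_upper_bound => //; exists (`|u|^-1 *: u) => //=.
  rewrite normrZ ger0_norm; last by rewrite invr_ge0.
  by rewrite mulVf // normr_eq0.
rewrite linearZ /= normrZ ger0_norm; last by rewrite invr_ge0.
by rewrite -ler_pdivlMl ?invr_gt0 // invrK mulrC.
Qed.

Set Implicit Arguments. Unset Strict Implicit.
Section IP.
Variables (R : realType) (Y : normedModType R) (ip : Y -> Y -> R).
Hypothesis Hip : is_inner_product ip.

Lemma ipC u v : ip u v = ip v u.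
Proof. by case: Hip. Qed.
Lemma ipDl u v w : ip (u + v) w = ip u w + ip v w.
Proof. by case: Hip => _ H _ _; have := H 1 u v w; rewrite scale1r mul1r. Qed.
Lemma ipZl a u w : ip (a *: u) w = a * ip u w.
Proof. case: Hip => _ H _ _; have := H a u 0 w.
have h0 : ip 0 w = 0.
  have := H 1 0 0 w; rewrite scale1r addr0 mul1r; lra.
by rewrite addr0 h0 addr0. Qed.
Lemma ip0l w : ip 0 w = 0.
Proof. by rewrite -(scale0r 0) ipZl mul0r. Qed.
Lemma ipNl u w : ip (- u) w = - ip u w.
Proof. by rewrite -scaleN1r ipZl mulN1r. Qed.
Lemma ipDr u v w : ip w (u + v) = ip w u + ip w v.
Proof. by rewrite ipC ipDl !(ipC w). Qed.
Lemma ipZr a u w : ip w (a *: u) = a * ip w u.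
Proof. by rewrite ipC ipZl ipC. Qed.
Lemma ipNr u w : ip w (- u) = - ip w u.
Proof. by rewrite ipC ipNl ipC. Qed.
Lemma ip0r w : ip w 0 = 0.
Proof. by rewrite ipC ip0l. Qed.
Lemma ipsq u : `|u| ^+ 2 = ip u u.
Proof. by case: Hip. Qed.
Lemma ipge0 u : 0 <= ip u u.
Proof. by case: Hip. Qed.
End IP.
Section Scal.
Variable R : realType.

Lemma lim_s (a b : R) : 0 <= a -> 0 <= b ->
  (forall s, 0 < s -> s < 1 -> a * (1 - s) <= b) -> a <= b.
Proof.
move=> a0 b0 H; rewrite leNgt; apply/negP => ba.
have a0' : 0 < a by lra.
have := H ((a - b) / (2 * a)).
have e : a * (1 - (a - b) / (2 * a)) = (a + b) / 2 by field; lra.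
rewrite e; have h1 : 0 < (a - b) / (2 * a) by apply: divr_gt0; lra.
have h2 : (a - b) / (2 * a) < 1 by rewrite ltr_pdivrMr; lra.
move=> /(_ h1 h2); lra.
Qed.

Lemma lim_final (a b C : R) : 0 <= C ->
  (forall th ep, 0 < th -> th <= 1 -> 0 < ep -> ep <= 1 ->
     a <= b + ep / th + th * C) -> a <= b.
Proof.
move=> C0 H; rewrite leNgt; apply/negP => ba.
set d := a - b.
have d0 : 0 < d by rewrite /d; lra.
set th := d / (2 * (C + d)).
have th0 : 0 < th by apply: divr_gt0; lra.
have th1 : th <= 1 by rewrite /th ler_pdivrMr; lra.
set ep := th * (d / (4 * (1 + d))).
have q0 : 0 < d / (4 * (1 + d)) by apply: divr_gt0; lra.
have q1 : d / (4 * (1 + d)) <= 1 / 4 by rewrite ler_pdivrMr; lra.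
have q2 : d / (4 * (1 + d)) <= d / 4 by rewrite ler_pdivrMr; nra.
have ep0 : 0 < ep by apply: mulr_gt0.
have ep1 : ep <= 1 by rewrite /ep; nra.
have e1 : ep / th = d / (4 * (1 + d)) by rewrite /ep; field; lra.
have e2 : th * C < d / 2.
  rewrite /th mulrAC ltr_pdivrMr; last lra.
  nra.
have := H th ep th0 th1 ep0 ep1; rewrite e1; rewrite /d in q2 e2 *; lra.
Qed.

Lemma descent_scal (K c0 g a b G D : R) : 0 <= K -> 0 < c0 -> 0 < g -> 0 <= D ->
  0 <= 4 * c0 * g * K * a + 4 * c0 ^+ 2 * b + K ^+ 2 * g ^+ 2 * G ->
  b <= K * D -> (K = 0 -> a = 0) ->
  - (K / (2 * c0) * g ^+ 2 / 2 * G) <= g * a + c0 * D.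
Proof.
move=> K0 c00 g0 D0 sq bD Ka.
have [K00|Kp] := eqVneq K 0.
  rewrite K00 (Ka K00) !mul0r mulr0 oppr0; nra.
have Kp' : 0 < K by rewrite lt_def Kp K0.
have e : K / (2 * c0) * g ^+ 2 / 2 * G = (K * g ^+ 2 * G) / (4 * c0).
  by field; lra.
have h : 0 <= 4 * c0 * (g * a + c0 * D) + K * g ^+ 2 * G.
  have : 0 <= K * (4 * c0 * (g * a + c0 * D) + K * g ^+ 2 * G) by nra.
  by rewrite pmulr_rge0.
rewrite e; set q := (4 * c0)^-1.
have q0 : 0 < q by rewrite /q invr_gt0; lra.
have q1 : 4 * c0 * q = 1 by rewrite /q mulfV //; lra.
rewrite mulrC -/q.
have : 0 <= q * (4 * c0 * (g * a + c0 * D) + K * g ^+ 2 * G) by nra.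
rewrite mulrDr mulrA (mulrC q (4 * c0)) q1 mul1r; lra.
Qed.

Lemma mono_scal (K c0 g a b D : R) : 0 <= K -> 0 < c0 -> 0 < g -> 0 <= D ->
  g * (K / (2 * c0)) < 1 -> 2 * c0 * D <= - (g * a) -> b <= K * D ->
  2 * a + b <= 0.
Proof.
move=> K0 c00 g0 D0 gL h bD.
have gK : g * K < 2 * c0.
  by move: gL; rewrite mulrA ltr_pdivrMr; lra.
have a0 : a <= 0 by nra.
nra.
Qed.
End Scal.

Ltac ipx Hip := rewrite ?(ipDl Hip, ipDr Hip, ipNl Hip, ipNr Hip, ipZl Hip, ipZr Hip, ip0l Hip, ip0r Hip).

Lemma final_scal (R : realType) (g T cc a VV VE VL LL LE EE GG E : R) :
  0 < g -> 0 < T ->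
  (4 * (g * T / 3) * VL + LL) / (2 * g) + cc * g * T ^+ 2 * GG
    <= T * (a + LE - 2 * (g * T / 3) * VV + 2 * (g * T / 3) * VE + E) ->
  0 <= (g * T) ^+ 2 * EE + (g * T) ^+ 2 / 3 * VV + 3 / 8 * LL
       - 2 * (g * T) ^+ 2 / 3 * VE - (g * T) * LE + 2 * (g * T) / 3 * VL ->
  cc * g * T * GG + (8 * g * T)^-1 * LL
    <= a - g * T / 3 * VV + g * T * EE + E.
Proof.
move=> g0 T0 h sq.
have s0 : 0 < g * T by exact: mulr_gt0.
set s := g * T in s0 sq *.
have si : 0 < s^-1 by rewrite invr_gt0.
have E1 : (4 * (g * T / 3) * VL + LL) / (2 * g) + cc * g * T ^+ 2 * GG
   = T * (2 / 3 * VL + 2^-1 * LL * s^-1 + cc * g * T * GG).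
  by rewrite /s; field; rewrite ?(gt_eqF g0, gt_eqF T0, andbT).
rewrite E1 ler_pM2l // in h.
have E2 : (8 * g * T)^-1 = 8^-1 * s^-1.
  by rewrite /s; field; rewrite ?(gt_eqF g0, gt_eqF T0, andbT).
rewrite E2.
have : 0 <= s^-1 * ((g * T) ^+ 2 * EE + (g * T) ^+ 2 / 3 * VV + 3 / 8 * LL
       - 2 * (g * T) ^+ 2 / 3 * VE - (g * T) * LE + 2 * (g * T) / 3 * VL).
  by apply: mulr_ge0 => //; exact: ltW.
have -> : s^-1 * ((g * T) ^+ 2 * EE + (g * T) ^+ 2 / 3 * VV + 3 / 8 * LL
       - 2 * (g * T) ^+ 2 / 3 * VE - (g * T) * LE + 2 * (g * T) / 3 * VL)
  = s * EE + s / 3 * VV + 3 / 8 * LL * s^-1 - 2 * s / 3 * VE - LE + 2 / 3 * VL.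
  by rewrite /s; field; rewrite ?(gt_eqF g0, gt_eqF T0, andbT).
move=> hh; move: h; rewrite -/s => h; lra.
Qed.

Lemma le_sum_term (R : realType) (F : nat -> R) t k : (forall j, 0 <= F j) ->
  (k <= t)%N -> F k <= \sum_(j < t.+1) F j.
Proof.
move=> F0 hk; have hk' : (k < t.+1)%N by [].
rewrite (bigD1 (Ordinal hk')) //= lerDl; apply: sumr_ge0 => i _; exact: F0.
Qed.

Section Core.
Variables (R : realType) (X Y : normedModType R) (ip : Y -> Y -> R).
Hypothesis Hip : is_inner_product ip.
Variable A : {linear X -> Y}.
Variables (K c0 gamma : R).
Hypotheses (HK : 0 <= K) (HN : forall u, `|A u| ^+ 2 <= K * `|u| ^+ 2)
  (Hc0 : 0 < c0) (Hg : 0 < gamma) (HgL : gamma * (K / (2 * c0)) < 1).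
Variables (fin : X -> Prop) (r : X -> R).
Hypothesis Hr0 : forall z, 0 <= r z.
Hypothesis HSC : forall a b s, fin a -> fin b -> 0 <= s <= 1 ->
  fin (s *: a + (1 - s) *: b) /\
  r (s *: a + (1 - s) *: b) + c0 * s * (1 - s) * `|a - b| ^+ 2
    <= s * r a + (1 - s) * r b.
Variables (x : nat -> X) (lam : nat -> Y) (ybar y : Y) (xd : X).
Hypotheses (Hfx : forall k, fin (x k)) (Hfxd : fin xd) (Hxd : A xd = y).
Hypothesis Hmin : forall t z, fin z ->
  r (x t) - ip (lam t) (A (x t)) <= r z - ip (lam t) (A z).
Hypotheses (Hl0 : lam 0%N = 0)
  (HlS : forall t, lam t.+1 = lam t - gamma *: (A (x t) - ybar)).

Lemma SCmin k z : fin z ->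
  r (x k) - ip (lam k) (A (x k)) + c0 * `|z - x k| ^+ 2
    <= r z - ip (lam k) (A z).
Proof.
move=> fz.
have b0 := Hmin k fz.
suff h : c0 * `|z - x k| ^+ 2 <=
   (r z - ip (lam k) (A z)) - (r (x k) - ip (lam k) (A (x k))) by lra.
apply: lim_s; first by apply: mulr_ge0; [exact: ltW|exact: sqr_ge0].
  lra.
move=> s s0 s1.
have s01 : 0 <= s <= 1 by apply/andP; split; [exact: ltW|exact: ltW].
have [fw hw] := HSC fz (Hfx k) s01.
have hm := Hmin k fw.
rewrite linearD !linearZ /= in hm; move: hm; ipx Hip => hm.
set D := `|z - x k| ^+ 2 in hw *.
have D0 : 0 <= D by exact: sqr_ge0.
set P := ip (lam k) (A z) in hm *.
set Q := ip (lam k) (A (x k)) in hm *.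
have h : s * (c0 * D * (1 - s)) <= s * (r z - P - (r (x k) - Q)).
  have -> : s * (c0 * D * (1 - s)) = c0 * s * (1 - s) * D by ring.
  lra.
by rewrite ler_pM2l in h.
Qed.

Lemma Gmono k : ip (A (x k.+1) - ybar) (A (x k.+1) - ybar)
   <= ip (A (x k) - ybar) (A (x k) - ybar).
Proof.
have h1 := SCmin k (Hfx k.+1).
have h2 := SCmin k.+1 (Hfx k).
rewrite HlS (distrC (x k) (x k.+1)) in h2.
have hn := HN (x k.+1 - x k).
rewrite linearB /= (ipsq Hip) in hn.
set D := `|x k.+1 - x k| ^+ 2 in h1 h2 hn.
have D0 : 0 <= D by exact: sqr_ge0.
set l := lam k in h1 h2.
set a0 := A (x k) in h1 h2 hn *.
set a1 := A (x k.+1) in h1 h2 hn *.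
have := mono_scal (a := ip (a0 - ybar) (a1 - a0)) HK Hc0 Hg D0 HgL _ hn.
have s1 := ipC Hip a0 a1; have s2 := ipC Hip a0 ybar; have s3 := ipC Hip a1 ybar.
have s4 := ipC Hip l a0; have s5 := ipC Hip l a1; have s6 := ipC Hip l ybar.
move: h1 h2 hn; ipx Hip => h1 h2 hn.
move=> H; have {}H := H (ltac:(lra)).
lra.
Qed.

Lemma desc k :
  r (x k) - ip (lam k) (A (x k) - ybar)
  + gamma * ip (A (x k) - ybar) (A (x k) - ybar)
  - K / (2 * c0) * gamma ^+ 2 / 2 * ip (A (x k) - ybar) (A (x k) - ybar)
  <= r (x k.+1) - ip (lam k.+1) (A (x k.+1) - ybar).
Proof.
have h1 := SCmin k (Hfx k.+1).
rewrite HlS.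
have hn := HN (x k.+1 - x k).
rewrite linearB /= (ipsq Hip) in hn.
set D := `|x k.+1 - x k| ^+ 2 in h1 hn.
have D0 : 0 <= D by exact: sqr_ge0.
set l := lam k in h1 *.
set a0 := A (x k) in h1 hn *.
set a1 := A (x k.+1) in h1 hn *.
set g := a0 - ybar.
set d := a1 - a0 in hn.
have s1 := ipC Hip a0 a1; have s2 := ipC Hip a0 ybar; have s3 := ipC Hip a1 ybar.
have s4 := ipC Hip l a0; have s5 := ipC Hip l a1; have s6 := ipC Hip l ybar.
have sq : 0 <= 4 * c0 * gamma * K * ip g d + 4 * c0 ^+ 2 * ip d d
               + K ^+ 2 * gamma ^+ 2 * ip g g.
  have := ipge0 Hip (K * gamma *: g + 2 * c0 *: d).
  ipx Hip; rewrite ?(ipC Hip a1 a0) ?(ipC Hip ybar a0) ?(ipC Hip ybar a1); lra.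
have Ka : K = 0 -> ip g d = 0.
  move=> K0; rewrite K0 mul0r in hn.
  have : `|d| ^+ 2 = 0 by apply/eqP; rewrite eq_le sqr_ge0 andbT (ipsq Hip).
  move/eqP; rewrite sqrf_eq0 normr_eq0 => /eqP d0.
  by rewrite d0 ip0r.
have hd := descent_scal HK Hc0 Hg D0 sq hn Ka.
move: h1 hd; ipx Hip.
rewrite ?(ipC Hip a1 a0) ?(ipC Hip ybar a0) ?(ipC Hip ybar a1) ?(ipC Hip a0 l) ?(ipC Hip a1 l) ?(ipC Hip ybar l).
move=> h1 hd. lra.
Qed.

Let G k := ip (A (x k) - ybar) (A (x k) - ybar).
Let phi k := r (x k) - ip (lam k) (A (x k) - ybar).
Let cc := 2^-1 - K / (2 * c0) * gamma / 2.
Let N (mu : Y) k := ip (mu - lam k) (mu - lam k).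

Lemma step k (mu : Y) (W : R) : W <= r (x k) - ip mu (A (x k) - ybar) ->
  (N mu k.+1 - N mu k) / (2 * gamma) + cc * gamma * G k <= phi k.+1 - W.
Proof.
move=> hW.
have hd := desc k.
have E : N mu k.+1 - N mu k = 2 * gamma * (ip mu (A (x k) - ybar)
     - ip (lam k) (A (x k) - ybar)) + gamma ^+ 2 * G k.
  rewrite /N /G HlS; set l := lam k; set a0 := A (x k).
  ipx Hip; rewrite ?(ipC Hip a0 mu) ?(ipC Hip ybar mu) ?(ipC Hip l mu)
    ?(ipC Hip a0 l) ?(ipC Hip ybar l) ?(ipC Hip ybar a0).
  lra.
rewrite E.
have -> : (2 * gamma * (ip mu (A (x k) - ybar) - ip (lam k) (A (x k) - ybar))
    + gamma ^+ 2 * G k) / (2 * gamma)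
  = (ip mu (A (x k) - ybar) - ip (lam k) (A (x k) - ybar)) + gamma / 2 * G k.
  by field; apply/eqP => h; move: Hg; rewrite h ltxx.
rewrite /cc /phi; rewrite /G in hd *.
lra.
Qed.

Lemma cc_ge0 : 0 <= cc.
Proof.
rewrite /cc; have : gamma * (K / (2 * c0)) < 1 := HgL.
have -> : K / (2 * c0) * gamma / 2 = (gamma * (K / (2 * c0))) / 2 by ring.
lra.
Qed.

Lemma L_ge0 : 0 <= K / (2 * c0).
Proof. apply: divr_ge0 => //; apply: mulr_ge0 => //; exact: ltW. Qed.

Lemma sumstep (mu : Y) (W : R) t :
  (forall k, (k <= t)%N -> W <= r (x k) - ip mu (A (x k) - ybar)) ->
  (N mu t.+1 - N mu 0) / (2 * gamma) + cc * gamma * (t.+1%:R) ^+ 2 * G t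
    <= t.+1%:R * (phi t.+1 - W).
Proof.
elim: t => [|t IH] hW.
  have := step (hW 0%N (leqnn 0)).
  by rewrite expr1n mulr1 mul1r.
have {IH} IH := IH (fun k hk => hW k (leqW hk)).
have st := step (hW t.+1 (leqnn _)).
have ds := desc t.+1.
have gm := Gmono t.
have -> : (t.+2)%:R = (t.+1)%:R + 1 :> R by rewrite -natr1.
set T := t.+1%:R in IH *.
have T0 : 0 <= T by rewrite /T ler0n.
have G1 : 0 <= G t.+1 := ipge0 Hip _.
have c0' := cc_ge0. have L0 := L_ge0.
have h1 := ler_wpM2l T0 ds.
have h2 : cc * gamma * T ^+ 2 * G t.+1 <= cc * gamma * T ^+ 2 * G t.
  apply: ler_wpM2l => //; apply: mulr_ge0; [apply: mulr_ge0 => //; exact: ltW|exact: sqr_ge0].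
have h3 : 0 <= T * (K / (2 * c0) * gamma ^+ 2 / 2 * G t.+1).
  apply: mulr_ge0 => //; apply: mulr_ge0 => //; apply: mulr_ge0 => //.
  apply: mulr_ge0 => //; exact: sqr_ge0.
rewrite /G /phi in IH st h1 h2 h3 G1 gm *.
rewrite /cc in IH st h2 *.
lra.
Qed.

Lemma dual_ub t : phi t.+1 <= r xd + ip (lam t.+1) (ybar - y).
Proof.
have h := Hmin t.+1 Hfxd; rewrite Hxd in h.
rewrite /phi; move: h; ipx Hip => h; lra.
Qed.

Lemma approx k (z : X) (th ep q : R) : fin z -> 0 < th -> th <= 1 ->
  (forall w, fin w -> r z + q * ip (A z - y) (A z - y)
                       <= r w + q * ip (A w - y) (A w - y) + ep) ->
  r z - ip (- (2 * q) *: (A z - y)) (A z - y) - ep / th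
    - th * (q * ip (A (x k) - A z) (A (x k) - A z))
  <= r (x k) - ip (- (2 * q) *: (A z - y)) (A (x k) - y).
Proof.
move=> fz th0 th1 hJ.
have th01 : 0 <= th <= 1 by apply/andP; split => //; exact: ltW.
have [fw hw] := HSC (Hfx k) fz th01.
have hj := hJ _ fw.
have D0 : 0 <= c0 * th * (1 - th) * `|x k - z| ^+ 2.
  apply: mulr_ge0; last exact: sqr_ge0.
  apply: mulr_ge0; last lra.
  apply: mulr_ge0; exact: ltW.
rewrite linearD !linearZ /= in hj.
set e' := ep / th.
have Eep : ep = th * e' by rewrite /e'; field; rewrite gt_eqF.
rewrite Eep in hj.
rewrite -(ler_pM2l th0).
set a := A (x k) in hj *; set b := A z in hj *.
move: hj; ipx Hip.
rewrite ?(ipC Hip b a) ?(ipC Hip y a) ?(ipC Hip y b).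
move=> hj.
nra.
Qed.

Theorem core t (z : X) (th ep : R) : fin z -> 0 < th -> th <= 1 ->
  0 < ep -> ep <= 1 ->
  (forall w, fin w -> r z + gamma * t.+1%:R / 3 * `|A z - y| ^+ 2
       <= r w + gamma * t.+1%:R / 3 * `|A w - y| ^+ 2 + ep) ->
  cc * gamma * t.+1%:R * `|A (x t) - ybar| ^+ 2
    + (8 * gamma * t.+1%:R)^-1 * `|lam t.+1| ^+ 2
  <= r xd - r z - gamma * t.+1%:R / 3 * `|A z - y| ^+ 2
     + gamma * t.+1%:R * `|ybar - y| ^+ 2 + ep / th
     + th * (2 * (gamma * t.+1%:R / 3) * (\sum_(k < t.+1) `|A (x k) - y| ^+ 2)
             + 2 * (r xd + 1)).
Proof.
move=> fz th0 th1 ep0 ep1 hJ.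
set T := t.+1%:R in hJ *.
have T0 : 0 < T by rewrite /T ltr0n.
set q := gamma * T / 3 in hJ *.
have q0 : 0 <= q by rewrite /q; apply: divr_ge0 => //; apply: mulr_ge0; exact: ltW.
have hJ' : forall w, fin w -> r z + q * ip (A z - y) (A z - y)
     <= r w + q * ip (A w - y) (A w - y) + ep.
  by move=> w fw; rewrite -!(ipsq Hip); exact: hJ.
have Bz : q * ip (A z - y) (A z - y) <= r xd + 1.
  have := hJ' xd Hfxd; rewrite Hxd subrr (ip0l Hip) mulr0; have := Hr0 z; lra.
set Sig := \sum_(k < t.+1) _.
set Cst := 2 * q * Sig + 2 * (r xd + 1).
set mu := - (2 * q) *: (A z - y).
set W := r z - ip mu (A z - y) - ep / th - th * Cst + ip mu (ybar - y).
have hW : forall k, (k <= t)%N -> W <= r (x k) - ip mu (A (x k) - ybar).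
  move=> k hk.
  have ha := approx k fz th0 th1 hJ'; rewrite -/mu in ha.
  have hs := le_sum_term (F := fun j => `|A (x j) - y| ^+ 2)
     (fun j => sqr_ge0 _) hk.
  rewrite /= (ipsq Hip) -/Sig in hs.
  have par : ip (A (x k) - A z) (A (x k) - A z)
      <= 2 * ip (A (x k) - y) (A (x k) - y) + 2 * ip (A z - y) (A z - y).
    have := ipge0 Hip ((A (x k) - y) + (A z - y)).
    set a := A (x k); set b := A z.
    ipx Hip; rewrite ?(ipC Hip b a) ?(ipC Hip y a) ?(ipC Hip y b); lra.
  have h1 : q * ip (A (x k) - A z) (A (x k) - A z) <= Cst.
    have := ler_wpM2l q0 par; have := ler_wpM2l q0 hs; rewrite /Cst; lra.
  have h2 := ler_wpM2l (ltW th0) h1.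
  rewrite /W; move: ha h2; rewrite !(ipDr Hip) !(ipNr Hip); lra.
have ss := sumstep hW.
have du := dual_ub t.
have EN : N mu t.+1 - N mu 0 = 4 * q * ip (A z - y) (lam t.+1) + ip (lam t.+1) (lam t.+1).
  rewrite /N Hl0 subr0 /mu; set b := A z; set l := lam t.+1.
  ipx Hip; rewrite ?(ipC Hip y b) ?(ipC Hip l b) ?(ipC Hip l y); lra.
rewrite EN in ss.
have hp : phi t.+1 - W <= (r xd - r z) + ip (lam t.+1) (ybar - y)
      - 2 * q * ip (A z - y) (A z - y) + 2 * q * ip (A z - y) (ybar - y)
      + (ep / th + th * Cst).
  rewrite /W /mu; move: du; rewrite !(ipZl Hip); lra.
have hT := ler_wpM2l (ltW T0) hp.
have sq : 0 <= (gamma * T) ^+ 2 * ip (ybar - y) (ybar - y)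
     + (gamma * T) ^+ 2 / 3 * ip (A z - y) (A z - y)
     + 3 / 8 * ip (lam t.+1) (lam t.+1)
     - 2 * (gamma * T) ^+ 2 / 3 * ip (A z - y) (ybar - y)
     - (gamma * T) * ip (lam t.+1) (ybar - y)
     + 2 * (gamma * T) / 3 * ip (A z - y) (lam t.+1).
  have h1 := ipge0 Hip ((gamma * T) *: (ybar - y) + 2^-1 *: (mu - lam t.+1)).
  have h2 := ipge0 Hip (mu - 2^-1 *: lam t.+1).
  have h3 : 0 <= 2^-1 * ip (mu - 2^-1 *: lam t.+1) (mu - 2^-1 *: lam t.+1).
    by apply: mulr_ge0 => //; rewrite invr_ge0.
  move: h1 h3; rewrite /mu /q; set b := A z; set l := lam t.+1.
  ipx Hip; rewrite ?(ipC Hip y b) ?(ipC Hip l b) ?(ipC Hip l y)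
    ?(ipC Hip ybar b) ?(ipC Hip ybar y) ?(ipC Hip ybar l).
  move=> h1 h3; lra.
have := final_scal (cc := cc) (a := r xd - r z) (E := ep / th + th * Cst)
   (GG := ip (A (x t) - ybar) (A (x t) - ybar)) Hg T0 _ sq.
move=> /(_ (le_trans ss hT)) H.
rewrite !(ipsq Hip) /G; rewrite addrA in H; exact: H.
Qed.

End Core.

Theorem lemma3p2
  (R : realType)
  (X : completeNormedModType R)              (* Banach space *)
  (Y : completeNormedModType R)              (* Hilbert space ... *)
  (ip : Y -> Y -> R) (Hip : is_inner_product ip)  (* ... with inner product ip *)
  (A : {linear X -> Y}) (HAc : continuous A)  (* bounded linear operator *)
  (Rf : X -> \bar R)
  (HR0 : forall x, (0 <= Rf x)%E)
  (HRp : proper_fun Rf)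
  (HRlsc : lower_semicontinuous Rf)
  (c0 : R) (Hc0 : 0 < c0) (HRsc : strongly_convex c0 Rf)
  (y : Y)
  (Hsol : exists x, (Rf x < +oo)%E /\ A x = y)
  (xd : X) (Hxd : R_minimizing_solution A Rf y xd)
  (* noise model *)
  (d : measure_display) (T : measurableType d) (P : probability T R)
  (yv : nat -> T -> Y)
  (Hmeas : forall i v, measurable_fun setT (fun w => ip (yv i w) v))
  (Hint : forall v, P.-integrable setT (fun w => (ip (yv 1%N w) v)%:E))
  (Hmean : forall v, (\int[P]_w (ip (yv 1%N w) v)%:E = (ip y v)%:E)%E)
  (Hvar0 : (0 < \int[P]_w (`|yv 1%N w - y| ^+ 2)%:E)%E)
  (Hvar1 : (\int[P]_w (`|yv 1%N w - y| ^+ 2)%:E < +oo)%E)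
  (n : nat) (Hn : (0 < n)%N)
  (gamma : R) (Hgamma : 0 < gamma)
  (HgL : gamma * (opnorm A ^+ 2 / (2 * c0)) < 1) :
  forall (w : T) (x : nat -> X) (lam : nat -> Y),
    let ybar := n%:R^-1 *: \sum_(1 <= i < n.+1) yv i w in
    lam 0%N = 0 ->
    (forall t z, (Rf (x t) - (ip (lam t) (A (x t)))%:E
                  <= Rf z - (ip (lam t) (A z))%:E)%E) ->
    (forall t, lam t.+1 = lam t - gamma *: (A (x t) - ybar)) ->
    forall t : nat,
      let L := opnorm A ^+ 2 / (2 * c0) in
      let c := 2^-1 - L * gamma / 2 in
      ((c * gamma * t.+1%:R * `|A (x t) - ybar| ^+ 2
        + (8 * gamma * t.+1%:R)^-1 * `|lam t.+1| ^+ 2)%:E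
       <= eta_t A Rf y xd gamma t + (gamma * t.+1%:R * `|ybar - y| ^+ 2)%:E)%E.
Proof.
move=> w x lam ybar Hl0 Hmin HlS t; cbv zeta.
pose fin (z : X) : Prop := (Rf z < +oo)%E.
pose r (z : X) := fine (Rf z).
have finE : forall z, fin z -> Rf z = (r z)%:E.
  by move=> z fz; rewrite /r fineK // ge0_fin_numE.
have Hr0 : forall z, 0 <= r z by move=> z; apply: fine_ge0.
have HSC : forall a b s, fin a -> fin b -> 0 <= s <= 1 ->
  fin (s *: a + (1 - s) *: b) /\
  r (s *: a + (1 - s) *: b) + c0 * s * (1 - s) * `|a - b| ^+ 2
    <= s * r a + (1 - s) * r b.
  move=> a b s fa fb s01.
  have h := HRsc a b s fa fb s01.
  rewrite (finE a fa) (finE b fb) in h.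
  have fw : fin (s *: a + (1 - s) *: b).
    rewrite /fin; apply: (le_lt_trans _ (ltry (s * r a + (1 - s) * r b
          - c0 * s * (1 - s) * `|a - b| ^+ 2))).
    rewrite EFinB leeBrDr //; exact: h.
  split => //; move: h; rewrite (finE _ fw) -EFinD -EFinM -EFinM -EFinD lee_fin.
  done.
have [z0 fz0] := HRp.
have Hfx : forall k, fin (x k).
  move=> k; have h := Hmin k z0.
  rewrite /fin ltNge leye_eq; apply/negP => /eqP E.
  rewrite E (finE _ fz0) /= in h.
  by move: h; rewrite leye_eq.
have Hfxd : fin xd.
  case: Hsol => x1 [f1 e1]; apply: (le_lt_trans _ f1); exact: Hxd.2 _ e1.
have Hmin' : forall t z, fin z ->
    r (x t) - ip (lam t) (A (x t)) <= r z - ip (lam t) (A z).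
  by move=> t' z fz; have := Hmin t' z; rewrite (finE _ fz) (finE _ (Hfx t')) lee_fin.
have HN : forall u, `|A u| ^+ 2 <= opnorm A ^+ 2 * `|u| ^+ 2.
  move=> u; have h := @opnorm_le _ _ _ A HAc u; have := normr_ge0 (A u).
  rewrite -exprMn; move=> h0; apply: lerXn2r => //; rewrite nnegrE //.
  exact: (le_trans h0 h).
have HK : 0 <= opnorm A ^+ 2 by exact: sqr_ge0.
set TT := t.+1%:R.
have T0 : 0 < TT by rewrite /TT ltr0n.
set q := gamma * TT / 3.
have q0 : 0 <= q by rewrite /q; apply: divr_ge0 => //; apply: mulr_ge0 => //; exact: ltW.
set Sig := \sum_(k < t.+1) `|A (x k) - y| ^+ 2.
have Sig0 : 0 <= Sig by apply: sumr_ge0 => i _; exact: sqr_ge0.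
set Cst := 2 * q * Sig + 2 * (r xd + 1).
have Cst0 : 0 <= Cst.
  rewrite /Cst; have := Hr0 xd; have : 0 <= q * Sig by exact: mulr_ge0.
  lra.
have elt : forall z, fin z ->
    ((r xd - r z - q * `|A z - y| ^+ 2)%:E <= eta_t A Rf y xd gamma t)%E.
  move=> z fz; apply: ereal_sup_ubound; exists z => //.
  by rewrite (finE _ fz) (finE _ Hfxd).
have eta0 : (0 <= eta_t A Rf y xd gamma t)%E.
  have := elt xd Hfxd; rewrite (proj1 Hxd) !subrr normr0 expr0n /= mulr0 subr0.
  done.
case Eeta : (eta_t A Rf y xd gamma t) => [e| |]; last first.
- by rewrite Eeta in eta0.
- by rewrite /= leey.
rewrite -EFinD lee_fin.
pose J (w : X) := (Rf w + (q * `|A w - y| ^+ 2)%:E)%E.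
pose I := ereal_inf [set J w | w in [set: X]].
have IJ : forall w, (I <= J w)%E.
  by move=> w'; apply: ereal_inf_lbound; exists w'.
have I0 : (0 <= I)%E.
  apply: le_ereal_inf_tmp => _ [w' _ <-]; rewrite /J; apply: adde_ge0 => //.
  rewrite lee_fin; apply: mulr_ge0 => //; exact: sqr_ge0.
have Ifin : (I < +oo)%E.
  apply: (le_lt_trans (IJ xd)); rewrite /J (finE _ Hfxd); exact: ltry.
have Ifn : I \is a fin_num by rewrite ge0_fin_numE.
set i := fine I.
have IE : I = i%:E by rewrite /i fineK.
apply: (lim_final (C := Cst)) => // th ep th0 th1 ep0 ep1.
have [_ [z _ <-] Jz] : exists2 v, [set J w | w in [set: X]] v & (v < (i + ep)%:E)%E.
  by apply: ereal_inf_lt; rewrite -/I IE lte_fin; lra.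
have fz : fin z.
  rewrite /fin; apply: (le_lt_trans _ (ltry (i + ep))); apply: (le_trans _ (ltW Jz)).
  rewrite /J; apply: leeDl; rewrite lee_fin; apply: mulr_ge0 => //; exact: sqr_ge0.
have hJ : forall w, fin w -> r z + q * `|A z - y| ^+ 2
       <= r w + q * `|A w - y| ^+ 2 + ep.
  move=> w' fw; have := IJ w'; rewrite IE /J (finE _ fw) -EFinD lee_fin => h.
  move: Jz; rewrite /J (finE _ fz) -EFinD lte_fin => h'; lra.
have := core Hip HK HN Hc0 Hgamma HgL Hr0 HSC Hfx Hfxd (proj1 Hxd) Hmin' Hl0 HlS
   fz th0 th1 ep0 ep1 hJ.
have := elt z fz; rewrite Eeta lee_fin.
rewrite -/TT -/q -/Sig -/Cst.
move=> h1 h2; apply: (le_trans h2); by rewrite !lerD2r.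
Qed.
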